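(* The expected number of rows of the (unshifted) Ferrers diagram underlying a uniformly random type-B permutation tableau of size $n$, i.e. the expected number of south steps on its boundary, equals $\dfrac{n+1}{4}$.
   Context: A Ferrers diagram is a left-justified array of cells whose row lengths weakly decrease from top to bottom (rows of length $0$ are allowed). Its half-perimeter is the number of rows plus the number of columns. Its southeast boundary, traversed from the northeast corner to the southwest corner, consists of $n$ unit steps, each south or west; south steps correspond to rows and west steps to columns. If the diagram has $c$ columns, the shifted Ferrers diagram is obtained by inserting $c$ new left-justified rows above it, of lengths $c,c-1,\dots,1$ from top to bottom; the rightmost cell of each inserted row is a diagonal cell. A type-B permutation tableau of size $n$ is a filling of a shifted Ferrers diagram of half-perimeter $n$ with $0$'s and $1$'s such that: (1) every column contains at least one $1$; (2) no $0$ has both a $1$ above it in its column and a $1$ to its left in its row; (3) if a diagonal cell contains $0$ then every cell of its row contains $0$. Only the rows of the original (unshifted) Ferrers diagram are counted, not the inserted rows. Let $\mathcal{B}_n$ be the set of such tableaux with the uniform probability measure $\mathbb{P}_n$ and expectation $\mathbb{E}_n$. *)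

(* Defs.v *)
From mathcomp Require Import all_boot all_order all_algebra.
Set Implicit Arguments. Unset Strict Implicit. Unset Printing Implicit Defensive.
Import GRing.Theory Num.Theory.

(* Encoding of type-B permutation tableaux of size n.
   - The southeast boundary of the (unshifted) Ferrers diagram, read from the
     NE corner to the SW corner, is a word w of n letters:
     true = south step (a row), false = west step (a column).
   - Columns are indexed 0..c-1 from left to right, where c = ncols w.
   - The shifted diagram has n = c + (#rows) rows, indexed 0..n-1 from top to
     bottom: rows 0..c-1 are the inserted (staircase) rows, row r < c having
     length r+1 and its rightmost cell (r, r) as diagonal cell; row c+i is the
     i-th row (from the top) of the original diagram, whose length is the
     number of west steps after the corresponding south step.
   - A filling is a 0/1 function on the n x n grid, required to vanish
     outside the shifted diagram (true = 1, false = 0). *)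

Definition ncols (w : seq bool) : nat := count negb w.

Definition nrows (w : seq bool) : nat := count id w.

Definition orig_lens (w : seq bool) : seq nat :=
  [seq count negb (drop i.+1 w) | i <- iota 0 (size w) & nth false w i].

Definition rowlen (w : seq bool) (r : nat) : nat :=
  if r < ncols w then r.+1 else nth 0 (orig_lens w) (r - ncols w).

Definition in_shape (w : seq bool) (r j : nat) : bool := j < rowlen w r.

Definition tableau (n : nat) : finType :=
  (n.-tuple bool * {ffun 'I_n * 'I_n -> bool})%type.

Definition is_typeB (n : nat) (t : tableau n) : bool :=
  let w := val t.1 in
  let f := t.2 in
  [&&
      [forall r : 'I_n, forall j : 'I_n, f (r, j) ==> in_shape w r j],
      [forall j : 'I_n, (j < ncols w) ==> [exists r : 'I_n, f (r, j)]],
      [forall r : 'I_n, forall j : 'I_n,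
         (in_shape w r j && ~~ f (r, j)) ==>
         ~~ ([exists r' : 'I_n, (r' < r) && f (r', j)] &&
             [exists j' : 'I_n, (j' < j) && f (r, j')])] &
      [forall r : 'I_n, ((r < ncols w) && ~~ f (r, r)) ==>
                        [forall j : 'I_n, ~~ f (r, j)]]].

Definition typeB_tableaux (n : nat) : {set tableau n} := [set t | is_typeB t].

Definition expected_rows (n : nat) : rat :=
  (\sum_(t in typeB_tableaux n) (nrows (val t.1))%:R) / (#|typeB_tableaux n|)%:R.

(* Main.v *)
Require Import Defs.
From Stdlib Require Import FunctionalExtensionality.
From mathcomp Require Import all_boot all_order all_algebra.
From mathcomp Require Import zify ring lra.
Import GRing.Theory Num.Theory.
Local Open Scope ring_scope.
Local Close Scope ring_scope.
Set Implicit Arguments. Unset Strict Implicit. Unset Printing Implicit Defensive.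

Lemma size_orig w : size (orig_lens w) = nrows w.
Proof.
rewrite /orig_lens size_map size_filter /nrows.
by rewrite -[in RHS](mkseq_nth false w) /mkseq count_map.
Qed.

Lemma ncols_rcons w a : ncols (rcons w a) = ncols w + ~~ a.
Proof. by rewrite /ncols -cats1 count_cat /= addn0. Qed.

Lemma nrows_rcons w a : nrows (rcons w a) = nrows w + a.
Proof. by rewrite /nrows -cats1 count_cat /= addn0. Qed.

Lemma size_cr w : size w = ncols w + nrows w.
Proof. by rewrite /ncols /nrows addnC -(count_predC id). Qed.

Lemma orig_rcons w a : orig_lens (rcons w a) =
  if a then rcons (orig_lens w) 0 else map succn (orig_lens w).
Proof.
rewrite /orig_lens size_rcons -addn1 iotaD add0n /= filter_cat /= nth_rcons ltnn eqxx.
have E: [seq i <- iota 0 (size w) | nth false (rcons w a) i] =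
        [seq i <- iota 0 (size w) | nth false w i].
  by apply: eq_in_filter => i; rewrite mem_iota => /andP[_ hi]; rewrite nth_rcons hi.
rewrite E map_cat.
set L := [seq i <- iota 0 (size w) | nth false w i].
have -> : [seq count negb (drop i.+1 (rcons w a)) | i <- L] =
          [seq count negb (drop i.+1 w) + ~~ a | i <- L].
  apply/eq_in_map => i; rewrite mem_filter mem_iota => /and3P[_ _ hi].
  by rewrite drop_rcons // -cats1 count_cat /= addn0.
clear E; case: a => /=.
  rewrite -[rcons _ 0]cats1; congr (_ ++ _).
    by apply/eq_map => i; rewrite addn0.
  by rewrite drop_oversize // size_rcons.
by rewrite cats0 -map_comp; apply/eq_map => i /=; rewrite addn1.
Qed.

Lemma rowlen_le w r : rowlen w r <= ncols w.
Proof.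
rewrite /rowlen; case: ifP => // _.
case: (ltnP (r - ncols w) (size (orig_lens w))) => h; last by rewrite nth_default.
move: (mem_nth 0 h); rewrite /orig_lens => /mapP[i _ ->].
rewrite /ncols -{2}(cat_take_drop i.+1 w) count_cat; exact: leq_addl.
Qed.

Lemma rowlen_ge w r : size w <= r -> rowlen w r = 0.
Proof.
move=> h; rewrite /rowlen size_cr in h *; case: ifP => [h2|_]; first lia.
by rewrite nth_default // size_orig; lia.
Qed.

Lemma in_shape_r w r j : in_shape w r j -> r < size w.
Proof. rewrite /in_shape => h; case: (ltnP r (size w)) => // /rowlen_ge; lia. Qed.

Lemma in_shape_j w r j : in_shape w r j -> j < ncols w.
Proof. rewrite /in_shape => h; have := rowlen_le w r; lia. Qed.

Lemma ncols_le w : ncols w <= size w.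
Proof. rewrite size_cr; lia. Qed.

Lemma in_shape_south w : in_shape (rcons w true) =2 in_shape w.
Proof.
move=> r j; rewrite /in_shape /rowlen ncols_rcons addn0 orig_rcons.
case: ifP => // h; rewrite nth_rcons size_orig.
case: ifP => // h2; rewrite if_same (nth_default 0 (s:=orig_lens w)) // size_orig; lia.
Qed.

Lemma rowlen_west0 w : rowlen (rcons w false) 0 = 1.
Proof. by rewrite /rowlen ncols_rcons addn1. Qed.

Lemma rowlen_westS w r : r < size w -> rowlen (rcons w false) r.+1 = (rowlen w r).+1.
Proof.
move=> hr; rewrite /rowlen ncols_rcons addn1 ltnS orig_rcons; case: ifP => // h.
rewrite subSS (nth_map 0) // size_orig; move: hr; rewrite size_cr; lia.
Qed.

Lemma in_shape_west00 w : in_shape (rcons w false) 0 0.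
Proof. by rewrite /in_shape rowlen_west0. Qed.

Lemma in_shape_west0S w j : in_shape (rcons w false) 0 j.+1 = false.
Proof. by rewrite /in_shape rowlen_west0. Qed.

Lemma in_shape_westS0 w r : in_shape (rcons w false) r.+1 0 = (r < size w).
Proof.
case: (ltnP r (size w)) => hr; rewrite /in_shape.
  by rewrite rowlen_westS.
by rewrite rowlen_ge // size_rcons.
Qed.

Lemma in_shape_westSS w r j : in_shape (rcons w false) r.+1 j.+1 = in_shape w r j.
Proof.
case: (ltnP r (size w)) => hr; rewrite /in_shape.
  by rewrite rowlen_westS.
by rewrite rowlen_ge ?size_rcons // rowlen_ge.
Qed.

Definition validN (w : seq bool) (g : nat -> nat -> bool) : Prop :=
 [/\ (forall r j, g r j -> in_shape w r j),
     (forall j, j < ncols w -> exists r, g r j),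
     (forall r j r' j', in_shape w r j -> ~~ g r j -> r' < r -> g r' j ->
          j' < j -> g r j' -> False) &
     (forall r j, r < ncols w -> ~~ g r r -> ~~ g r j)].

Definition freeP w (g : nat -> nat -> bool) r : Prop :=
  (r < ncols w -> g r r) /\
  (forall j k, in_shape w r j -> ~~ g r j -> k < r -> ~~ g k j).

Definition freeb w (g : nat -> nat -> bool) r : bool :=
  ((r < ncols w) ==> g r r) &&
  all (fun j => in_shape w r j ==> (g r j || ~~ has (fun k => g k j) (iota 0 r)))
      (iota 0 (ncols w)).

Lemma freebP w g r : reflect (freeP w g r) (freeb w g r).
Proof.
apply: (iffP andP) => [[/implyP h1 /allP h2]|[h1 h2]]; split => //.
- move=> j k hs hg hk; have := h2 j; rewrite mem_iota add0n (in_shape_j hs) => /(_ isT).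
  rewrite hs (negbTE hg) /= => /hasPn; apply; by rewrite mem_iota.
- by apply/implyP.
- apply/allP => j _; apply/implyP => hs; case hg: (g r j) => //=.
  apply/hasPn => k; rewrite mem_iota add0n => /andP[_ hk]; apply: h2 => //; by rewrite hg.
Qed.

Definition hw (g : nat -> nat -> bool) (v : nat -> bool) r j :=
  if j is j'.+1 then (if r is r'.+1 then g r' j' else false) else v r.

Lemma valid_west w g (v : nat -> bool) : (forall r, v r -> r <= size w) ->
  validN (rcons w false) (hw g v) <->
  [/\ validN w g, (exists r, v r) & forall r, v r.+1 -> freeP w g r].
Proof.
move=> hv; split.
  case=> H0 H1 H2 H3; split.
  - split.
    + by move=> r j h; rewrite -in_shape_westSS; apply: (H0 r.+1 j.+1).
    + move=> j hj; case: (H1 j.+1); first by rewrite ncols_rcons addn1.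
      by case=> [|r] //= h; exists r.
    + move=> r j r' j' hs hg hr' hg' hj' hgj'.
      apply: (H2 r.+1 j.+1 r'.+1 j'.+1) => //; by rewrite in_shape_westSS.
    + move=> r j hr hg; apply: (H3 r.+1 j.+1) => //; by rewrite ncols_rcons addn1.
  - by case: (H1 0); [rewrite ncols_rcons addn1|move=> r h; exists r].
  - move=> r hvr; split.
      move=> hr; apply/negPn/negP => hg.
      by move: (H3 r.+1 0); rewrite ncols_rcons addn1 ltnS => /(_ hr hg); rewrite /= hvr.
    move=> j k hs hg hk; apply/negP => hgk.
    by apply: (H2 r.+1 j.+1 k.+1 0) => //; rewrite in_shape_westSS.
case=> [[G0 G1 G2 G3] [r0 hr0] F]; split.
- move=> [|r] [|j] //=.
  + by move=> _; apply: in_shape_west00.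
  + by move=> /hv; rewrite in_shape_westS0.
  + by move=> /G0; rewrite in_shape_westSS.
- move=> [|j] hj; first by exists r0.
  case: (G1 j); first by move: hj; rewrite ncols_rcons addn1.
  by move=> r h; exists r.+1.
- move=> [|r] [|j] // r' j'.
  rewrite in_shape_westSS /= => hs hg.
  case: r' => [|r'] // hr' hg'; case: j' => [|j'] hj' hgj'.
    by case: (F r hgj') => _ /(_ j r' hs hg hr'); rewrite hg'.
  by apply: (G2 r j r' j').
- move=> [|r] [|j] //= hr hg.
  + apply/negP => hv1; case: (F r hv1) => h1 _; move: hg; rewrite h1 //.
    by move: hr; rewrite ncols_rcons addn1.
  + by apply: G3 => //; move: hr; rewrite ncols_rcons addn1.
Qed.

Lemma valid_south w g : validN (rcons w true) g <-> validN w g.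
Proof.
rewrite /validN ncols_rcons addn0.
have E := in_shape_south w.
split; case=> H0 H1 H2 H3; split => //.
- by move=> r j /H0; rewrite E.
- by move=> r j r' j'; rewrite -E; apply: H2.
- by move=> r j /H0; rewrite E.
- by move=> r j r' j'; rewrite E; apply: H2.
Qed.

Lemma free_west0 w g v : freeb (rcons w false) (hw g v) 0 = v 0.
Proof.
apply/freebP/idP => [[h _]|h]; first by apply: h; rewrite ncols_rcons addn1.
by split => // j k _ _.
Qed.

Lemma free_westS w g v r : r < size w ->
  freeb (rcons w false) (hw g v) r.+1 =
  freeb w g r && (v r.+1 || ~~ has v (iota 0 r.+1)).
Proof.
move=> hr; apply/freebP/andP.
  case=> h1 h2; split.
    apply/freebP; split.
      by move=> hc; apply: h1; rewrite ncols_rcons addn1.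
    move=> j k hs hg hk; apply: (h2 j.+1 k.+1) => //; by rewrite in_shape_westSS.
  case hv: (v r.+1); rewrite ?orTb ?orFb //; apply/hasPn => k; rewrite mem_iota add0n => /andP[_ hk].
  by apply: (h2 0 k) => //; [rewrite in_shape_westS0 | rewrite /= hv].
case=> /freebP[f1 f2] h; split.
  by move=> hc; apply: f1; move: hc; rewrite ncols_rcons addn1.
move=> [|j] k.
  rewrite in_shape_westS0 => _ hv hk; move: h; rewrite (negbTE (hv : ~~ v r.+1)) orFb => /hasPn h.
  by apply: h; rewrite mem_iota.
rewrite in_shape_westSS /= => hs hg; case: k => [|k] //= hk.
exact: f2.
Qed.

Definition ucount w g := count (freeb w g) (iota 0 (size w)).

Lemma ucount_west w g v : ucount (rcons w false) (hw g v) =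
  v 0 + count (fun r => freeb w g r && (v r.+1 || ~~ has v (iota 0 r.+1)))
              (iota 0 (size w)).
Proof.
rewrite /ucount size_rcons /= free_west0 -(addn0 1) iotaDl count_map.
congr (_ + _); apply: eq_in_count => r; rewrite mem_iota add0n => /andP[_ hr] /=.
by rewrite add1n free_westS.
Qed.

Lemma ucount_south w g : ucount (rcons w true) g = (ucount w g).+1.
Proof.
rewrite /ucount size_rcons -addn1 iotaD count_cat /= addn0 add0n.
have E : forall r, freeb (rcons w true) g r = freeb w g r.
  move=> r; rewrite /freeb ncols_rcons addn0; congr (_ && _).
  by apply: eq_all => j; rewrite in_shape_south.
have F : freeb w g (size w).
  apply/freebP; split; first by move=> h; have := ncols_le w; lia.
  by move=> j k /in_shape_r; rewrite ltnn.
by rewrite E (eq_count E) F addn1.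
Qed.

Fixpoint cnt (phi v : seq bool) (s : bool) : nat :=
  match phi, v with
  | a :: phi', b :: v' => (a && (b || ~~ s)) + cnt phi' v' (s || b)
  | _, _ => 0
  end.

Fixpoint alle (v phi : seq bool) : bool :=
  match v, phi with
  | b :: v', a :: phi' => (b ==> a) && alle v' phi'
  | _, _ => true
  end.

Lemma cnt_count phi v s : size v = size phi ->
  cnt phi v s = count (fun r => nth false phi r &&
     (nth false v r || ~~ (s || has (nth false v) (iota 0 r)))) (iota 0 (size phi)).
Proof.
elim: phi v s => [|a phi IH] [|b v] s //= [hs].
rewrite orbF (IH v (s || b) hs) -(addn0 1) iotaDl count_map; congr (_ + _).
apply: eq_count => r /=; rewrite add0n -[1]/(1+0) iotaDl has_map orbA.
congr (_ && (_ || ~~ (_ || _))); apply: eq_has => k /=; by rewrite add1n.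
Qed.

Lemma alleP v phi : size v = size phi ->
  reflect (forall r, nth false v r -> nth false phi r) (alle v phi).
Proof.
elim: v phi => [|b v IH] [|a phi] //= hs.
- by apply: ReflectT => r; rewrite nth_nil.
- case: hs => hs; apply: (iffP andP).
    by case=> /implyP h1 /(IH _ hs) h2 [|r] /=; [exact: h1|exact: h2].
  by move=> h; split; [apply/implyP; apply: (h 0)|apply/(IH _ hs) => r; apply: (h r.+1)].
Qed.

Definition gf n (f : {ffun 'I_n * 'I_n -> bool}) (r j : nat) : bool :=
  match (insub r : option 'I_n), (insub j : option 'I_n) with
  | Some r', Some j' => f (r', j')
  | _, _ => false
  end.

Definition mkf n (h : nat -> nat -> bool) : {ffun 'I_n * 'I_n -> bool} :=
  [ffun p => h (val p.1) (val p.2)].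

Lemma gfE n (f : {ffun 'I_n * 'I_n -> bool}) (r j : 'I_n) : gf f r j = f (r, j).
Proof. by rewrite /gf !valK. Qed.

Lemma gf_bound n (f : {ffun 'I_n * 'I_n -> bool}) r j : gf f r j -> r < n /\ j < n.
Proof.
rewrite /gf; case: insubP => [r' hr _|//]; case: insubP => [j' hj _|//]; by [].
Qed.

Lemma gfN n (f : {ffun 'I_n * 'I_n -> bool}) r j : ~~ (r < n) || ~~ (j < n) -> gf f r j = false.
Proof. move=> h; apply/negP => /gf_bound [h1 h2]; move: h; by rewrite h1 h2. Qed.

Lemma gf_mkf n (h : nat -> nat -> bool) : (forall r j, h r j -> r < n /\ j < n) -> gf (mkf n h) = h.
Proof.
move=> hb; apply: functional_extensionality => r; apply: functional_extensionality => j.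
case: (ltnP r n) => hr; last first.
  rewrite gfN; last by rewrite -leqNgt hr.
  by apply/esym/negP => /hb []; rewrite ltnNge hr.
case: (ltnP j n) => hj; last first.
  rewrite gfN; last by rewrite -!leqNgt hj orbT.
  by apply/esym/negP => /hb [_]; rewrite ltnNge hj.
by rewrite -[r]/(val (Ordinal hr)) -[j]/(val (Ordinal hj)) gfE ffunE.
Qed.

Lemma mkf_gf n (f : {ffun 'I_n * 'I_n -> bool}) : mkf n (gf f) = f.
Proof. by apply/ffunP => [[r j]]; rewrite ffunE gfE. Qed.

Lemma typeBP n (t : tableau n) : is_typeB t <-> validN (val t.1) (gf t.2).
Proof.
case: t => [[w hw] f] /=; have hsz : size w = n by apply/eqP.
rewrite /is_typeB /=; split.
  case/and4P => /forallP H0 /forallP H1 /forallP H2 /forallP H3; split.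
  - move=> r j /[dup] /gf_bound [hr hj].
    rewrite -[r]/(val (Ordinal hr)) -[j]/(val (Ordinal hj)) gfE.
    by move=> h; move: (forallP (H0 (Ordinal hr)) (Ordinal hj)) => /implyP; apply.
  - move=> j hj; have hjn : j < n by rewrite -hsz; exact: (leq_trans hj (ncols_le w)).
    have := H1 (Ordinal hjn); rewrite /= hj => /existsP [r hr].
    by exists r; rewrite -[j]/(val (Ordinal hjn)) gfE.
  - move=> r j r' j' hs hg hr' hg' hj' hgj'.
    have hr : r < n by rewrite -hsz; apply: in_shape_r hs.
    have hj : j < n by rewrite -hsz; exact: leq_trans (in_shape_j hs) (ncols_le w).
    have hrn : r' < n by exact: ltn_trans hr' hr.
    have hjn : j' < n by exact: ltn_trans hj' hj.
    have := forallP (H2 (Ordinal hr)) (Ordinal hj).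
    move: hg hg' hgj'.
    rewrite -[r]/(val (Ordinal hr)) -[j]/(val (Ordinal hj)) -[r']/(val (Ordinal hrn)) -[j']/(val (Ordinal hjn)) !gfE.
    move=> hg hg' hgj'; rewrite /= hs hg /=; case/nandP => /existsP; apply.
      by exists (Ordinal hrn); rewrite hr' hg'.
    by exists (Ordinal hjn); rewrite hj' hgj'.
  - move=> r j hr hg; have hrn : r < n by rewrite -hsz; exact: leq_trans hr (ncols_le w).
    case: (ltnP j n) => hj; last by rewrite gfN // -!leqNgt hj orbT.
    move: hg; rewrite -[r]/(val (Ordinal hrn)) -[j]/(val (Ordinal hj)) !gfE => hg.
    by have := H3 (Ordinal hrn); rewrite /= hr hg /= => /forallP; apply.
case=> H0 H1 H2 H3; apply/and4P; split.
- apply/forallP => r; apply/forallP => j; apply/implyP => h.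
  by apply: H0; rewrite gfE.
- apply/forallP => j; apply/implyP => hj; case: (H1 j hj) => r /[dup] /gf_bound [hr _].
  by rewrite -[r]/(val (Ordinal hr)) gfE => h; apply/existsP; exists (Ordinal hr).
- apply/forallP => r; apply/forallP => j; apply/implyP => /andP [hs hg].
  apply/nandP; case E1: [exists r' : 'I_n, (r' < r) && f (r', j)]; last by left.
  right; apply/negP => /existsP [j' /andP [hj' hgj']].
  case/existsP: E1 => r' /andP [hr' hg'].
  by apply: (H2 r j r' j') => //; rewrite gfE.
- apply/forallP => r; apply/implyP => /andP [hr hg]; apply/forallP => j.
  by have := H3 r j hr; rewrite !gfE; apply.
Qed.

Section Ext.
Variable n : nat.

Definition phi (t : tableau n) : seq bool :=
  [seq freeb (val t.1) (gf t.2) r | r <- iota 0 n].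

Definition ok (t : tableau n) (x : bool * n.+1.-tuple bool) : bool :=
  if x.1 then val x.2 == nseq n.+1 false
  else has id x.2 && alle (behead x.2) (phi t).

Definition ext (t : tableau n) (x : bool * n.+1.-tuple bool) : tableau n.+1 :=
  ([tuple of rcons t.1 x.1],
   mkf n.+1 (if x.1 then gf t.2 else hw (gf t.2) (nth false x.2))).

Definition lastw (s : n.+1.-tuple bool) := last (thead s) (behead s).
Definition tk (s : n.+1.-tuple bool) : n.-tuple bool :=
  [tuple of belast (thead s) (behead s)].

Lemma tkE (s : n.+1.-tuple bool) : val s = rcons (val (tk s)) (lastw s).
Proof.
rewrite /tk /lastw /= -lastI; case: s => [[|x s] hs] //.
Qed.

Definition restr (t : tableau n.+1) : tableau n :=
  (tk t.1, mkf n (if lastw t.1 then gf t.2 else fun r j => gf t.2 r.+1 j.+1)).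

Definition colt (h : nat -> bool) : n.+1.-tuple bool := [tuple of map h (iota 0 n.+1)].

Lemma nth_colt h r : nth false (colt h) r = if r < n.+1 then h r else false.
Proof.
case: ifP => hr; first by rewrite (nth_map 0) ?size_iota // nth_iota.
by rewrite nth_default // size_map size_iota leqNgt hr.
Qed.

Definition proj (t : tableau n.+1) : bool * n.+1.-tuple bool :=
  (lastw t.1, if lastw t.1 then [tuple of nseq n.+1 false] else colt (fun i => gf t.2 i 0)).

Lemma lastw_rcons (w : n.-tuple bool) a : lastw [tuple of rcons w a] = a.
Proof.
rewrite /lastw; case: w => [[|x s] hs] //=; by rewrite last_rcons.
Qed.

Lemma tk_rcons (w : n.-tuple bool) a : tk [tuple of rcons w a] = w.
Proof.
apply: val_inj; have := tkE [tuple of rcons w a]; rewrite lastw_rcons /=.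
by move/rcons_inj => [].
Qed.

Lemma hw_bound (g : nat -> nat -> bool) (v : n.+1.-tuple bool) :
  (forall r j, g r j -> r < n /\ j < n) ->
  forall r j, hw g (nth false v) r j -> r < n.+1 /\ j < n.+1.
Proof.
move=> hg r [|j] /=.
  move=> h; split => //; case: (ltnP r n.+1) => // hr.
  by move: h; rewrite nth_default // size_tuple.
by case: r => [|r] // /hg [h1 h2].
Qed.

Lemma gf_ext_south (t : tableau n) : gf (mkf n.+1 (gf t.2)) = gf t.2.
Proof. by apply: gf_mkf => r j /gf_bound [h1 h2]; split; apply: ltnW. Qed.

Lemma gf_ext_west (t : tableau n) (v : n.+1.-tuple bool) :
  gf (mkf n.+1 (hw (gf t.2) (nth false v))) = hw (gf t.2) (nth false v).
Proof. by apply: gf_mkf; apply: hw_bound => r j /gf_bound. Qed.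

Lemma restr_ext t x : restr (ext t x) = t.
Proof.
case: t => [w f]; case: x => [a v]; rewrite /restr /ext /= lastw_rcons tk_rcons.
case: a.
  by rewrite (gf_ext_south (w, f)) mkf_gf.
by rewrite (gf_ext_west (w, f)) /= mkf_gf.
Qed.

Lemma proj_ext t x : ok t x -> proj (ext t x) = x.
Proof.
case: t => [w f]; case: x => [a v]; rewrite /ok /proj /ext /= lastw_rcons.
case: a => /=.
  by move=> /eqP h; congr (_, _); apply: val_inj; rewrite /= h.
move=> _; congr (_, _); apply: val_inj.
rewrite (gf_ext_west (w, f)) /= -[in RHS](mkseq_nth false v) size_tuple.
by [].
Qed.

Lemma south_bound (w : seq bool) g : size w = n -> validN (rcons w true) g ->
  forall r j, g r j -> r < n /\ j < n.
Proof.
move=> hsz [H0 _ _ _] r j /H0; rewrite in_shape_south => hs; split.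
  by rewrite -hsz; apply: in_shape_r hs.
rewrite -hsz; exact: leq_trans (in_shape_j hs) (ncols_le w).
Qed.

Lemma west_bound (w : seq bool) g : size w = n -> validN (rcons w false) g ->
  forall r j, g r.+1 j.+1 -> r < n /\ j < n.
Proof.
move=> hsz [H0 _ _ _] r j /H0; rewrite in_shape_westSS => hs; split.
  by rewrite -hsz; apply: in_shape_r hs.
rewrite -hsz; exact: leq_trans (in_shape_j hs) (ncols_le w).
Qed.

Lemma west_eq (w : seq bool) (f : {ffun 'I_n.+1 * 'I_n.+1 -> bool}) :
  size w = n -> validN (rcons w false) (gf f) ->
  hw (gf (mkf n (fun r j => gf f r.+1 j.+1))) (nth false (colt (fun i => gf f i 0))) = gf f.
Proof.
move=> hsz hv; rewrite gf_mkf; last exact: west_bound hv.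
apply: functional_extensionality => r; apply: functional_extensionality => j.
case: j => [|j].
  change (nth false (colt (fun i => gf f i 0)) r = gf f r 0); rewrite nth_colt.
  case: ifP => // /negbT; rewrite -leqNgt => hr; apply/esym/negP => /gf_bound [].
  by rewrite ltnNge hr.
case: r => [|r] //=; apply/esym/negP; case: hv => H0 _ _ _ /H0.
by rewrite in_shape_west0S.
Qed.

Lemma ext_restr (t : tableau n.+1) : is_typeB t -> ext (restr t) (proj t) = t.
Proof.
case: t => [s f] /typeBP /=; rewrite tkE.
have hsz : size (tk s) = n by rewrite size_tuple.
rewrite /ext /restr /proj; case E: (lastw s) => hv.
  congr (_, _); first by apply: val_inj; rewrite [in RHS]tkE E.
  by rewrite gf_mkf ?mkf_gf //; apply: south_bound hv.
congr (_, _); first by apply: val_inj; rewrite [in RHS]tkE E.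
by rewrite (west_eq hsz hv) mkf_gf.
Qed.

Lemma restr_ok (t : tableau n.+1) : is_typeB t ->
  is_typeB (restr t) /\ ok (restr t) (proj t).
Proof.
case: t => [s f] /typeBP /=; rewrite tkE.
have hsz : size (tk s) = n by rewrite size_tuple.
rewrite /ok /restr /proj; case E: (lastw s) => hv.
  split; last by rewrite /= eqxx.
  apply: (proj2 (typeBP (tk s, mkf n (gf f)))); rewrite /= gf_mkf; last exact: south_bound hv.
  by move/valid_south: hv.
have hv' := hv; rewrite -(west_eq hsz hv) in hv'; move/valid_west: hv' => [].
  move=> r; rewrite nth_colt; case: ifP => // hr _; by rewrite size_tuple -ltnS.
move=> V [r0 hr0] F; split.
  by apply: (proj2 (typeBP (tk s, mkf n (fun r j => gf f r.+1 j.+1)))).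
rewrite [(false, _).1]/= [(false, _).2]/=.
apply/andP; split.
  apply/(has_nthP false); exists r0 => //; move: hr0; rewrite nth_colt size_tuple.
  by case: ifP.
apply/alleP; first by rewrite size_behead size_tuple /phi size_map size_iota.
move=> r; rewrite nth_behead nth_colt => h.
have hr : r < n by move: h; case: ifP.
rewrite /phi (nth_map 0) ?size_iota // nth_iota // add0n; apply/freebP.
by apply: F; rewrite nth_colt.
Qed.

Lemma ext_valid (t : tableau n) x : is_typeB t -> ok t x -> is_typeB (ext t x).
Proof.
case: t => [w f]; case: x => [a v] /typeBP /= hv; rewrite /ok /=.
have hsz : size w = n by rewrite size_tuple.
move=> hok; apply: (proj2 (typeBP (ext (w, f) (a, v)))); rewrite /ext; case: a hok => /= hok.
  by rewrite (gf_ext_south (w, f)); apply/valid_south.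
rewrite (gf_ext_west (w, f)) /=; apply/valid_west.
  move=> r h; case: (ltnP r n.+1) => hr; first by rewrite hsz -ltnS.
  by move: h; rewrite nth_default // size_tuple.
have hsb : size (behead v) = size (phi (w, f)).
  by rewrite size_behead size_tuple /phi size_map size_iota.
case/andP: hok => /(has_nthP false) [r0 _ h0] /(alleP hsb) hal; split => //.
  by exists r0.
move=> r hr; have := hal r; rewrite nth_behead => /(_ hr).
have hrn : r < n.
  case: (ltnP r n) => // hrn; move: hr; rewrite nth_default // size_tuple; lia.
by rewrite /phi (nth_map 0) ?size_iota // nth_iota // add0n => /freebP.
Qed.

End Ext.

Local Open Scope ring_scope.

Lemma sum_tcons m (F : m.+1.-tuple bool -> rat) :
  \sum_(v : m.+1.-tuple bool) F v =
  \sum_(b : bool) \sum_(v : m.-tuple bool) F [tuple of b :: v].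
Proof.
rewrite pair_big /=.
rewrite (reindex (fun p : bool * m.-tuple bool => [tuple of p.1 :: p.2])) //=.
exists (fun v => (thead v, [tuple of behead v])).
  by move=> [b v] _ /=; congr (_, _); apply: val_inj.
by move=> v _; rewrite [RHS]tuple_eta; apply: val_inj.
Qed.

Lemma sum_t0 (F : 0.-tuple bool -> rat) : \sum_(v : 0.-tuple bool) F v = F [tuple].
Proof. by rewrite (big_pred1 [tuple]) // => v; rewrite /= [v]tuple0; apply/esym/eqP. Qed.

Lemma sumL (y : rat) m : forall (phi : seq bool) s, size phi = m ->
  \sum_(v : m.-tuple bool) (if alle v phi then y ^+ cnt phi v s else 0) =
  if s then (1 + y) ^+ count id phi
  else y * (1 + y) ^+ count id phi - y ^+ (count id phi).+1 + y ^+ count id phi.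
Proof.
elim: m => [|m IH] [|a phi] s //= hs.
  by rewrite sum_t0 /=; case: s; rewrite ?expr0 ?expr1 //; ring.
case: hs => hs; rewrite sum_tcons big_bool /=.
have IHt := IH phi true hs; have IHf := IH phi false hs.
have E : forall b, \sum_(v : m.-tuple bool)
    (if (b ==> a) && alle v phi then y ^+ ((a && (b || ~~ s)) + cnt phi v (s || b)) else 0) =
    (if b ==> a then y ^+ (a && (b || ~~ s)) else 0) *
    \sum_(v : m.-tuple bool) (if alle v phi then y ^+ cnt phi v (s || b) else 0).
  move=> b; rewrite big_distrr /=; apply: eq_bigr => v _.
  by case: (b ==> a); case: (alle v phi); rewrite ?mulr0 ?mul0r ?exprD.
rewrite !E /=; clear E.
case: a; case: s; rewrite /= ?IHt ?IHf ?expr0 ?expr1 ?mul1r ?mul0r ?add0r ?addr0 //=.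
- rewrite add1n exprS; ring.
- rewrite add1n !exprS; ring.
Qed.

Definition uu n (t : tableau n) : nat := ucount (val t.1) (gf t.2).
Definition rw n (t : tableau n) : nat := nrows (val t.1).

Lemma decomp n (G : tableau n.+1 -> rat) :
  \sum_(t in typeB_tableaux n.+1) G t =
  \sum_(t in typeB_tableaux n) \sum_(x | ok t x) G (ext t x).
Proof.
rewrite (partition_big (@restr n) (fun t => t \in typeB_tableaux n)) /=; last first.
  by move=> t'; rewrite !inE => /restr_ok [].
apply: eq_bigr => t ht.
rewrite (reindex_onto (ext t) (@proj n)) /=; last first.
  by move=> t' /andP [ht' /eqP <-]; apply: ext_restr; move: ht'; rewrite inE.
apply: eq_bigl => x; apply/idP/idP.
  case/andP => /andP [h1 /eqP h2] /eqP h3.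
  by move: h1; rewrite inE => /restr_ok; rewrite h2 h3 => -[].
move=> hok; rewrite inE ext_valid ?restr_ext ?proj_ext ?eqxx //.
by move: ht; rewrite inE.
Qed.

Lemma uu_south n (t : tableau n) v : uu (ext t (true, v)) = (uu t).+1.
Proof. by rewrite /uu /ext /= (gf_ext_south t) ucount_south. Qed.

Lemma rw_ext n (t : tableau n) a v : rw (ext t (a, v)) = (rw t + a)%N.
Proof. by rewrite /rw /ext /= nrows_rcons. Qed.

Lemma uu_phi n (t : tableau n) : uu t = count id (phi t).
Proof. by rewrite /uu /ucount /phi count_map size_tuple. Qed.

Lemma uu_west n (t : tableau n) b (v : n.-tuple bool) :
  uu (ext t (false, [tuple of b :: v])) = (b + cnt (phi t) v b)%N.
Proof.
case: t => [w f]; rewrite /uu /ext [(false, _).1]/= [(false, _).2]/=.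
rewrite (gf_ext_west (w, f)) ucount_west cnt_count; last first.
  by rewrite /phi size_map size_iota size_tuple.
rewrite /= /phi size_map size_iota size_tuple; congr (_ + _)%N.
apply: eq_in_count => r; rewrite mem_iota add0n => hr /=.
rewrite (nth_map 0) ?size_iota // nth_iota // add0n.
congr (_ && (_ || ~~ (_ || _))).
by rewrite -[1%N]/(1+0)%N iotaDl has_map.
Qed.

Lemma alle_nseq m phi : alle (nseq m false) phi.
Proof. by elim: m phi => [|m IH] [|a phi] //=. Qed.

Lemma cnt_nseq phi : cnt phi (nseq (size phi) false) false = count id phi.
Proof. by elim: phi => [|a phi IH] //=; rewrite IH andbT. Qed.

Lemma fiber n (t : tableau n) (K : bool -> rat) (y : rat) :
  \sum_(x | ok t x) K x.1 * y ^+ uu (ext t x) =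
  K true * y ^+ (uu t).+1 + K false * (2 * y * (1 + y) ^+ uu t - y ^+ (uu t).+1).
Proof.
have -> : \sum_(x | ok t x) K x.1 * y ^+ uu (ext t x) =
          \sum_(a : bool) \sum_(v | ok t (a, v)) K a * y ^+ uu (ext t (a, v)).
  by rewrite pair_big_dep; apply: eq_big => [[a v]|[a v] _].
rewrite big_bool /=; congr (_ + _).
  rewrite (big_pred1 [tuple of nseq n.+1 false]) ?uu_south //.
have hs : size (phi t) = n by rewrite /phi size_map size_iota.
rewrite big_mkcond sum_tcons big_bool /=.
have E1 : \sum_(v : n.-tuple bool)
   (if alle v (phi t) then K false * y ^+ uu (ext t (false, [tuple of true :: v])) else 0)
   = K false * (y * (1 + y) ^+ uu t).
  rewrite uu_phi -(sumL y true hs) big_distrr big_distrr /=; apply: eq_bigr => v _.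
  by case: (alle v (phi t)); rewrite ?mulr0 // uu_west exprD expr1.
rewrite E1.
set X := fun v : n.-tuple bool => K false * y ^+ uu (ext t (false, [tuple of false :: v])).
have E2 : \sum_(v : n.-tuple bool) (if alle v (phi t) then X v else 0) =
   X [tuple of nseq n false] +
   \sum_(v : n.-tuple bool) (if has id v && alle v (phi t) then X v else 0).
  rewrite (bigD1 [tuple of nseq n false]) //= alle_nseq; congr (_ + _).
  rewrite [in RHS](bigD1 [tuple of nseq n false]) //= has_nseq andbF andFb add0r.
  apply: eq_bigr => v hv; case E: (has id v) => //=.
  case/negP: hv; apply/eqP/val_inj => /=.
  have hall : all (predC id) v by rewrite all_predC E.
  rewrite -[in nseq _ _](size_tuple v); apply/all_pred1P; apply: sub_all hall => b /=.
  by case: b.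
have E3 : \sum_(v : n.-tuple bool) (if alle v (phi t) then X v else 0) =
    K false * (y * (1 + y) ^+ uu t - y ^+ (uu t).+1 + y ^+ uu t).
  rewrite uu_phi -(sumL y false hs) big_distrr /=; apply: eq_bigr => v _.
  by case: (alle v (phi t)); rewrite ?mulr0 // /X uu_west add0n.
have E4 : X [tuple of nseq n false] = K false * y ^+ uu t.
  by rewrite /X uu_west add0n /= -[in nseq n _]hs cnt_nseq uu_phi.
have E5 : \sum_(v : n.-tuple bool) (if has id v && alle v (phi t) then X v else 0) =
    K false * (y * (1 + y) ^+ uu t - y ^+ (uu t).+1).
  apply: (@addrI _ (X [tuple of nseq n false])); rewrite -E2 E3 E4; ring.
rewrite /= E5; ring.
Qed.

Definition Fs n (y : rat) := \sum_(t in typeB_tableaux n) y ^+ uu t.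
Definition Ds n (y : rat) := \sum_(t in typeB_tableaux n) (rw t)%:R * y ^+ uu t.

Lemma Fs_rec n y : Fs n.+1 y = 2 * y * Fs n (1 + y).
Proof.
rewrite /Fs decomp big_distrr /=; apply: eq_bigr => t _.
have h := fiber t (fun=> 1) y; rewrite /= in h.
rewrite (eq_bigr (fun x => 1 * y ^+ uu (ext t x))); last by move=> x _; rewrite mul1r.
rewrite h; ring.
Qed.

Lemma Ds_rec n y : Ds n.+1 y = 2 * y * Ds n (1 + y) + y * Fs n y.
Proof.
rewrite /Ds /Fs decomp !big_distrr -big_split /=; apply: eq_bigr => t _.
have h := fiber t (fun a => (rw t + a)%:R) y; rewrite /= in h.
have -> : \sum_(x | ok t x) (rw (ext t x))%:R * y ^+ uu (ext t x) =
   \sum_(x | ok t x) (rw t + x.1)%:R * y ^+ uu (ext t x).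
  by apply: eq_bigr => -[a v] _; rewrite rw_ext.
rewrite h !natrD exprS; ring.
Qed.

Lemma B0 : typeB_tableaux 0 = [set: tableau 0].
Proof.
apply/setP => t; rewrite !inE; apply/and4P; split;
  try (apply/forallP => -[]; by []).
Qed.

Lemma sum0 (G : tableau 0 -> rat) t0 : \sum_(t in typeB_tableaux 0) G t = G t0.
Proof.
rewrite B0; apply: big_pred1 => t; rewrite !inE; apply/esym/eqP.
case: t t0 => [w f] [w' f']; congr (_, _).
  by apply: val_inj; rewrite /= (tuple0 w) (tuple0 w').
by apply/ffunP => -[[]].
Qed.

Definition t0 : tableau 0 := ([tuple], [ffun => false]).

Lemma Fs0 y : Fs 0 y = 1.
Proof. by rewrite /Fs (sum0 _ t0) /uu /ucount /= expr0. Qed.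

Lemma Ds0 y : Ds 0 y = 0.
Proof. by rewrite /Ds (sum0 _ t0) /rw /= mul0r. Qed.

Lemma Fs_pos n : forall y : rat, 0 < y -> 0 < Fs n y.
Proof.
elim: n => [|n IH] y hy; first by rewrite Fs0.
rewrite Fs_rec; apply: mulr_gt0; first by apply: mulr_gt0.
by apply: IH; rewrite addrC ltr_wpDr.
Qed.

Lemma Qn n : forall y, (y + n%:R) * Fs n y = y * Fs n (1 + y).
Proof.
elim: n => [|n IH] y; first by rewrite !Fs0 addr0.
rewrite !Fs_rec.
have -> : (y + n.+1%:R) * (2 * y * Fs n (1 + y)) = 2 * y * ((1 + y + n%:R) * Fs n (1 + y)).
  by rewrite -addn1 natrD; ring.
rewrite IH; ring.
Qed.

Lemma Pn n : forall y, 4 * (y + n%:R - 1) * Ds n y = n%:R * (2 * y + n%:R - 1) * Fs n y.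
Proof.
elim: n => [|n IH] y; first by rewrite Ds0 Fs0; ring.
rewrite Ds_rec Fs_rec.
have e1 : 4 * (y + n%:R) * Ds n (1 + y) = n%:R * (2 * y + n%:R + 1) * Fs n (1 + y).
  have := IH (1 + y).
  have -> : 1 + y + n%:R - 1 = y + n%:R by ring.
  by move=> ->; congr (_ * _ * _); ring.
have -> : 4 * (y + n.+1%:R - 1) * (2 * y * Ds n (1 + y) + y * Fs n y) =
   2 * y * (4 * (y + n%:R) * Ds n (1 + y)) + 4 * y * ((y + n%:R) * Fs n y).
  by rewrite -addn1 natrD; ring.
rewrite e1 Qn -addn1 natrD; ring.
Qed.

Theorem mainTheorem4 (n : nat) : (0 < n)%N ->
  expected_rows n = (n.+1)%:R / 4%:R.
Proof.
move=> hn.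
have hD : \sum_(t in typeB_tableaux n) (nrows (val t.1))%:R = Ds n 1 :> rat.
  by apply: eq_bigr => t _; rewrite expr1n mulr1.
have hF : (#|typeB_tableaux n|)%:R = Fs n 1 :> rat.
  by rewrite /Fs (eq_bigr (fun _ => 1)) ?sumr_const // => t _; rewrite expr1n.
rewrite /expected_rows hD hF.
have hP := Pn n 1.
have hF0 : Fs n 1 != 0 by rewrite lt0r_neq0 // Fs_pos // ltr01.
have hn0 : (n%:R : rat) != 0 by rewrite pnatr_eq0 -lt0n.
have h2 : n%:R * (4 * Ds n 1 - n.+1%:R * Fs n 1) =
   4 * (1 + n%:R - 1) * Ds n 1 - n%:R * (2 * 1 + n%:R - 1) * Fs n 1.
  by rewrite -addn1 natrD; ring.
rewrite hP subrr in h2.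
move/eqP: h2; rewrite mulf_eq0 (negbTE hn0) /= subr_eq0 => /eqP e.
have e' : Ds n 1 = n.+1%:R * Fs n 1 / 4.
  by rewrite -e mulrC mulrA mulVf ?mul1r.
rewrite e'; field.
by rewrite hF0.
Qed.
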